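(* Let $k\ge 1$, $a\ge 1$ be integers and $N=2^a$. Then: (i) Every $X\in GL(Nk,\mathbb F_2)$ can be written as $X=PM$, where $P$ is an $Nk\times Nk$ permutation matrix and $M$ is a product of in-block factors and at most $4(N-1)$ transversal layers. (ii) If $X\in GL(Nk,\mathbb F_2)$ is block upper triangular or block lower triangular with respect to the partition of $[Nk]$ into $N$ consecutive blocks of size $k$ (i.e. its $k\times k$ block $X_{ij}$ vanishes for all $i>j$, respectively for all $i<j$), then $X$ itself (with no permutation factor) is a product of in-block factors and at most $2(N-1)$ transversal layers.
   Context: Setting: $N$ codeblocks of a CSS code each encoding $k$ logical qubits. Logical qubit $j\in[k]$ of codeblock $i\in[N]$ is given index $(i-1)k+j$. A logical circuit of CNOT gates on the $Nk$ logical qubits is described by its action on $X$-type logical operators, an invertible matrix in $GL(Nk,\mathbb F_2)$; composition of circuits corresponds to matrix multiplication. An in-block factor is a block-diagonal matrix $\mathrm{diag}(C_1,\dots,C_N)$ with each $C_i\in GL(k,\mathbb F_2)$ (for phantom codes these are realized by relabelling qubits, at zero physical cost). Let $E^{(N)}_{ij}\in\mathbb F_2^{N\times N}$ denote the matrix unit with a single $1$ in position $(i,j)$. A transversal layer is a matrix $I_{Nk}+\sum_{t=1}^{s}E^{(N)}_{i_tj_t}\otimes I_k$, where $(i_1,j_1),\dots,(i_s,j_s)$ are ordered pairs of codeblock indices and the $2s$ indices $i_1,j_1,\dots,i_s,j_s$ are pairwise distinct (a physical depth-one layer of transversal CNOTs between disjoint pairs of codeblocks). *)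

(* Defs.v *)
From mathcomp Require Import all_boot all_order all_algebra all_fingroup.
Set Implicit Arguments. Unset Strict Implicit. Unset Printing Implicit Defensive.
Import GRing.Theory.
Local Open Scope ring_scope.

(* Logical qubit j (0-based, j < k) of codeblock i (0-based, i < N)
   has global index i*k + j, i.e. (i-1)k+j in 1-based notation. *)
Lemma qidx_subproof (N k : nat) (i : 'I_N) (j : 'I_k) : (i * k + j < N * k)%N.
Proof.
case: i => i /= Hi; case: j => j /= Hj.
apply: (@leq_trans ((i.+1) * k)); first by rewrite mulSn addnC ltn_add2r.
by rewrite leq_mul2r Hi orbT.
Qed.

Definition qidx (N k : nat) (i : 'I_N) (j : 'I_k) : 'I_(N * k) :=
  Ordinal (qidx_subproof i j).

Definition in_block (N k : nat) (M : 'M['F_2]_(N * k)) : Prop :=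
  exists C : 'I_N -> 'M['F_2]_k,
    (forall i, C i \in unitmx) /\
    forall (i i' : 'I_N) (j j' : 'I_k),
      M (qidx i j) (qidx i' j') = if i == i' then C i j j' else 0.

(* Kronecker product A (x) B, with row/column index of (i,j) equal to i*k+j. *)
Definition kron_entry (N k : nat) (A : 'M['F_2]_N) (B : 'M['F_2]_k)
  (i i' : 'I_N) (j j' : 'I_k) : 'F_2 := A i i' * B j j'.

(* Transversal layer: I + sum_t E_{i_t j_t} (x) I_k with all 2s indices
   i_1, j_1, ..., i_s, j_s pairwise distinct. *)
Definition transversal_layer (N k : nat) (M : 'M['F_2]_(N * k)) : Prop :=
  exists s : seq ('I_N * 'I_N),
    uniq (flatten [seq [:: p.1; p.2] | p <- s]) /\
    forall (i i' : 'I_N) (j j' : 'I_k),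
      M (qidx i j) (qidx i' j') =
        (1%:M : 'M['F_2]_(N * k)) (qidx i j) (qidx i' j') +
        \sum_(p <- s) kron_entry (delta_mx p.1 p.2) (1%:M : 'M['F_2]_k) i i' j j'.

Definition mxprod (n : nat) (l : seq 'M['F_2]_n) : 'M['F_2]_n :=
  foldr (fun A B => A *m B) 1%:M l.

Definition circuit_with_layers (N k L : nat) (M : 'M['F_2]_(N * k)) : Prop :=
  exists l : seq (bool * 'M['F_2]_(N * k)),
    (forall t, t \in l ->
       if t.1 then transversal_layer t.2 else in_block t.2) /\
    (count (fun t => t.1) l <= L)%N /\
    M = mxprod (map snd l).

Definition block_upper (N k : nat) (X : 'M['F_2]_(N * k)) : Prop :=
  forall (i i' : 'I_N) (j j' : 'I_k), (i' < i)%N -> X (qidx i j) (qidx i' j') = 0.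
Definition block_lower (N k : nat) (X : 'M['F_2]_(N * k)) : Prop :=
  forall (i i' : 'I_N) (j j' : 'I_k), (i < i')%N -> X (qidx i j) (qidx i' j') = 0.

(* Main.v *)
Require Import Defs.
From mathcomp Require Import all_boot all_order all_algebra all_fingroup.
From mathcomp Require Import zify.
Set Implicit Arguments. Unset Strict Implicit. Unset Printing Implicit Defensive.
Import GRing.Theory.
Local Open Scope ring_scope.

Section Blocks.
Variables N k : nat.

Lemma kpos_of (r : 'I_(N * k)) : (0 < k)%N.
Proof. case: r => r /=; case: k => [|k']; last by []. by rewrite muln0. Qed.

Lemma blk_subproof (r : 'I_(N * k)) : (r %/ k < N)%N.
Proof. have kp := kpos_of r. by rewrite ltn_divLR. Qed.

Lemma bo_subproof (r : 'I_(N * k)) : (r %% k < k)%N.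
Proof. by rewrite ltn_pmod // (kpos_of r). Qed.

Definition blk (r : 'I_(N * k)) : 'I_N := Ordinal (blk_subproof r).
Definition bo (r : 'I_(N * k)) : 'I_k := Ordinal (bo_subproof r).

Lemma blk_qidx i j : blk (qidx i j) = i.
Proof.
have kp : (0 < k)%N := leq_ltn_trans (leq0n j) (ltn_ord j). apply: val_inj => /=.
rewrite divnMDl // divn_small ?addn0 //.
Qed.

Lemma bo_qidx i j : bo (qidx i j) = j.
Proof. by apply: val_inj => /=; rewrite modnMDl modn_small. Qed.

Lemma qidxK r : qidx (blk r) (bo r) = r.
Proof. by apply: val_inj => /=; rewrite -divn_eq. Qed.

Definition bm (F : 'I_N -> 'I_N -> 'M['F_2]_k) : 'M['F_2]_(N * k) :=
  \matrix_(r, c) F (blk r) (blk c) (bo r) (bo c).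
Definition unB (M : 'M['F_2]_(N * k)) (u v : 'I_N) : 'M['F_2]_k :=
  \matrix_(j, j') M (qidx u j) (qidx v j').

Lemma bmE F i j i' j' : bm F (qidx i j) (qidx i' j') = F i i' j j'.
Proof. by rewrite mxE !blk_qidx !bo_qidx. Qed.

Lemma bmK M : bm (unB M) = M.
Proof. by apply/matrixP => r c; rewrite !mxE !qidxK. Qed.

Lemma unBK F u v : unB (bm F) u v = F u v.
Proof. by apply/matrixP => j j'; rewrite mxE bmE. Qed.

Lemma bm_ext F G : (forall u v, F u v = G u v) -> bm F = bm G.
Proof. by move=> H; apply/matrixP => r c; rewrite !mxE H. Qed.

Lemma bmD F G : bm (fun u v => F u v + G u v) = bm F + bm G.
Proof. by apply/matrixP => r c; rewrite !mxE. Qed.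

Lemma bm_sum (T : Type) (ts : seq T) (F : T -> 'I_N -> 'I_N -> 'M['F_2]_k) :
  bm (fun u v => \sum_(t <- ts) F t u v) = \sum_(t <- ts) bm (F t).
Proof. apply/matrixP => r c; rewrite mxE !summxE; apply: eq_bigr => t _; by rewrite !mxE. Qed.

Lemma bm1 : bm (fun u v => if u == v then 1%:M else 0) = 1%:M.
Proof.
apply/matrixP => r c; rewrite !mxE.
have -> : (r == c) = (blk r == blk c) && (bo r == bo c).
  apply/eqP/andP => [->|[/eqP e1 /eqP e2]]; first by split.
  by rewrite -(qidxK r) -(qidxK c) e1 e2.
by case: eqP => _; rewrite !mxE.
Qed.

Lemma bm0 : bm (fun _ _ => 0) = 0.
Proof. by apply/matrixP => r c; rewrite !mxE. Qed.

Lemma sum_qidx (F : 'I_(N * k) -> 'F_2) :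
  \sum_r F r = \sum_u \sum_j F (qidx u j).
Proof.
rewrite pair_big /= (reindex (fun p : 'I_N * 'I_k => qidx p.1 p.2)) //.
exists (fun r => (blk r, bo r)) => [p _|r _] /=; last by rewrite qidxK.
by rewrite blk_qidx bo_qidx; case: p.
Qed.

Lemma bm_mul F G : bm F *m bm G = bm (fun u w => \sum_v F u v *m G v w).
Proof.
apply/matrixP => r c; rewrite !mxE sum_qidx summxE; apply: eq_bigr => v _.
rewrite !mxE; apply: eq_bigr => j _; by rewrite !mxE !blk_qidx !bo_qidx.
Qed.

Lemma bm_diagl (d : 'I_N -> 'M['F_2]_k) F :
  bm (fun u v => if u == v then d u else 0) *m bm F = bm (fun u v => d u *m F u v).
Proof.
rewrite bm_mul; apply: bm_ext => u w; rewrite (bigD1 u) //= eqxx big1 ?addr0 // => v.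
by rewrite eq_sym => /negbTE ->; rewrite mul0mx.
Qed.

Lemma bm_diagr (d : 'I_N -> 'M['F_2]_k) F :
  bm F *m bm (fun u v => if u == v then d u else 0) = bm (fun u v => F u v *m d v).
Proof.
rewrite bm_mul; apply: bm_ext => u w; rewrite (bigD1 w) //= eqxx big1 ?addr0 // => v.
by move=> /negbTE ->; rewrite mulmx0.
Qed.

Lemma unB_neq0 M u v : unB M u v != 0 -> exists j j', M (qidx u j) (qidx v j') != 0.
Proof.
move=> H.
case: (pickP (fun p : 'I_k * 'I_k => M (qidx u p.1) (qidx v p.2) != 0)) => [[j j'] hj|H0].
  by exists j, j'.
case/eqP: H; apply/matrixP => j j'; rewrite !mxE; by move: (H0 (j,j')) => /= /negbFE/eqP.
Qed.

End Blocks.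


Lemma mxprod_cat n (l1 l2 : seq 'M['F_2]_n) : mxprod (l1 ++ l2) = mxprod l1 *m mxprod l2.
Proof. elim: l1 => [|A l IH] /=; first by rewrite mul1mx. by rewrite IH mulmxA. Qed.

Section Circ.
Variables N k : nat.
Local Notation circ := (@circuit_with_layers N k).

Lemma circ_mul L1 L2 M1 M2 : circ L1 M1 -> circ L2 M2 -> circ (L1 + L2) (M1 *m M2).
Proof.
move=> [l1 [h1 [c1 ->]]] [l2 [h2 [c2 ->]]]; exists (l1 ++ l2); split.
  by move=> t; rewrite mem_cat => /orP[] ?; [apply: h1 | apply: h2].
by rewrite count_cat leq_add // map_cat mxprod_cat.
Qed.

Lemma circ_weak L1 L2 M : (L1 <= L2)%N -> circ L1 M -> circ L2 M.
Proof. move=> le [l [h [c e]]]; exists l; split => //; split => //; exact: leq_trans le. Qed.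

Lemma circ_one : circ 0 1%:M.
Proof. by exists [::]. Qed.

Lemma circ_inblock M : in_block M -> circ 0 M.
Proof. by move=> h; exists [:: (false, M)]; split; [move=> t; rewrite inE => /eqP -> | rewrite /= mulmx1]. Qed.

Lemma circ_layer M : transversal_layer M -> circ 1 M.
Proof. by move=> h; exists [:: (true, M)]; split; [move=> t; rewrite inE => /eqP -> | rewrite /= mulmx1]. Qed.

Lemma circ_mxprod (T : Type) (ts : seq T) (F : T -> 'M['F_2]_(N * k)) c :
  (forall t, circ c (F t)) -> circ (c * size ts) (mxprod (map F ts)).
Proof.
move=> H; elim: ts => [|t ts IH] /=; first by rewrite muln0; exact: circ_one.
by rewrite mulnS; apply: circ_mul.
Qed.

Lemma inblock_diag (d : 'I_N -> 'M['F_2]_k) : (forall u, d u \in unitmx) ->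
  in_block (bm (fun u v => if u == v then d u else 0)).
Proof.
move=> hd; exists d; split => // i i' j j'; rewrite bmE; by case: eqP; rewrite ?mxE.
Qed.
End Circ.

Section Pairs.
Variable T : eqType.
Variable Q : pred (T * T).
Hypothesis Q1 : forall p q, Q p -> Q q -> (p.1 == q.1) || (p.2 == q.2) -> p = q.
Hypothesis Q2 : forall p q, Q p -> Q q -> p.1 != q.2.

Lemma mem_pairs x (s : seq (T * T)) : x \in flatten [seq [:: p.1; p.2] | p <- s] ->
  exists2 q, q \in s & (x == q.1) || (x == q.2).
Proof. case/flattenP => l /mapP [q qs ->]; rewrite !inE => h; by exists q. Qed.

Lemma uniq_pairs (s : seq (T * T)) : uniq s -> all Q s ->
  uniq (flatten [seq [:: p.1; p.2] | p <- s]).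
Proof.
elim: s => //= p s IH /andP[pns us] /andP[Qp Qs].
have notin x : (x == p.1) || (x == p.2) -> x \notin flatten [seq [:: q.1; q.2] | q <- s].
  move=> hx; apply/negP => /mem_pairs [q qs hq].
  have Qq := allP Qs q qs.
  case/orP: hx => /eqP ex; rewrite ex in hq; case/orP: hq => /eqP e.
  - have epq : p = q by apply: Q1 => //; rewrite e eqxx.
    by move: pns; rewrite epq qs.
  - by move: (Q2 Qp Qq); rewrite e eqxx.
  - by move: (Q2 Qq Qp); rewrite e eqxx.
  - have epq : p = q by apply: Q1 => //; rewrite e eqxx orbT.
    by move: pns; rewrite epq qs.
rewrite /= inE negb_or (notin p.1) ?eqxx // (notin p.2) ?eqxx ?orbT // IH // !andbT.
by rewrite (Q2 Qp Qp).
Qed.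
End Pairs.

Section Layer.
Variables N k : nat.
Variable Q : pred ('I_N * 'I_N).
Variable Yf : 'I_N * 'I_N -> 'M['F_2]_k.
Hypothesis Q1 : forall p q, Q p -> Q q -> (p.1 == q.1) || (p.2 == q.2) -> p = q.
Hypothesis Q2 : forall p q, Q p -> Q q -> p.1 != q.2.
Hypothesis Q3 : forall p, Q p -> Yf p \in unitmx.

Lemma layer_Q : transversal_layer (1%:M + bm (fun u v => if Q (u, v) then (1%:M : 'M['F_2]_k) else 0)).
Proof.
exists [seq p <- enum {: 'I_N * 'I_N} | Q p]; split.
  by apply: (uniq_pairs Q1 Q2); [rewrite filter_uniq // enum_uniq | exact: filter_all].
move=> i i' j j'; rewrite mxE bmE; congr (_ + _).
rewrite /kron_entry big_filter big_mkcond (bigD1_seq (i, i')) ?mem_enum ?enum_uniq //=.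
rewrite big1_seq ?addr0 => [|p /andP[ne _]].
  by case: (Q (i, i')); rewrite ?mxE ?eqxx ?mul1r.
case: (Q p) => //; rewrite mxE.
case: p ne => p1 p2 ne /=.
case: (i =P p1) => [e1|_]; last by rewrite /= mul0r.
case: (i' =P p2) => [e2|_]; last by rewrite /= mul0r.
by move: ne; rewrite e1 e2 eqxx.
Qed.

Lemma layer_circ :
  @circuit_with_layers N k 1 (1%:M + bm (fun u v => if Q (u, v) then Yf (u, v) else 0)).
Proof.
pose d u := if [pick p | Q p && (p.1 == u)] is Some p then Yf p else 1%:M.
have dP p : Q p -> d p.1 = Yf p.
  move=> Qp; rewrite /d; case: pickP => [q /andP[Qq /eqP e]|H].
    by congr Yf; apply: Q1 => //; rewrite e eqxx.
  by move: (H p); rewrite Qp eqxx.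
have d2 p : Q p -> d p.2 = 1%:M.
  move=> Qp; rewrite /d; case: pickP => [q /andP[Qq /eqP e]|//].
  by move: (Q2 Qq Qp); rewrite e eqxx.
have dU u : d u \in unitmx.
  rewrite /d; case: pickP => [q /andP[Qq _]|_]; [exact: Q3 | exact: unitmx1].
pose D := bm (fun u v => if u == v then d u else 0).
pose D' := bm (fun u v => if u == v then invmx (d u) else 0).
pose L := 1%:M + bm (fun u v => if Q (u, v) then (1%:M : 'M['F_2]_k) else 0).
have -> : 1%:M + bm (fun u v => if Q (u, v) then Yf (u, v) else 0) = D *m L *m D'.
  rewrite /L -bm1 -!bmD /D /D' bm_diagl bm_diagr; apply: bm_ext => u v.
  case: (u =P v) => [<-|ne].
    have -> : Q (u, u) = false by apply/negP => Qu; move: (Q2 Qu Qu); rewrite eqxx.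
    by rewrite !addr0 mulmx1 mulmxV.
  case Quv: (Q (u, v)); rewrite !add0r ?mulmx0 ?mul0mx //.
  by rewrite (dP (u, v) Quv) (d2 (u, v) Quv) invmx1 !mulmx1.
exists [:: (false, D); (true, L); (false, D')]; split; last by rewrite /= mulmx1 mulmxA.
move=> t; rewrite !inE => /or3P[] /eqP -> /=.
- exact: inblock_diag.
- exact: layer_Q.
- by apply: inblock_diag => u; rewrite unitmx_inv.
Qed.
End Layer.


Lemma split2 k (Y : 'M['F_2]_k) : exists A : 'M['F_2]_k,
  ((A \in unitmx) || (A == 0)) && ((Y - A \in unitmx) || (Y - A == 0)).
Proof.
case: (boolP (Y \in unitmx)) => hY.
  by exists Y; rewrite hY subrr eqxx orbT.
set r := \rank Y.
have hr : (r < k)%N.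
  rewrite ltn_neqAle rank_leq_col andbT; apply: contra hY.
  by rewrite -row_full_unit.
pose s : {perm 'I_k} := perm (@ord_pred_inj k).
pose R : 'M['F_2]_k := perm_mx s *m pid_mx r.
have RE i j : R i j = ((s i == j :> nat) && (s i < r)%N)%:R.
  by rewrite /R -row_permE !mxE.
have Rlt i j : R i j != 0 -> (j < i)%N.
  rewrite RE permE /=.
  have E : ((i + k).-1 %% k = if (i : nat) == 0%N then k.-1 else (i : nat).-1)%N.
    case: i => [[|i'] hi] /=.
      by rewrite add0n modn_small // ltn_predL.
    by rewrite modnDr modn_small // ltnW.
  case: andP => [[/eqP e hlt] _|]; last by rewrite eqxx.
  have hi := ltn_ord i; have hj := ltn_ord j.
  move: E; case: eqP => i0 E; lia.
pose W := col_ebase Y *m perm_mx s^-1.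
have eY : Y = W *m R *m row_ebase Y.
  rewrite /W /R -[in LHS](mulmx_ebase Y); congr (_ *m _).
  by rewrite -!mulmxA (mulmxA (perm_mx _)) -perm_mxM mulVg perm_mx1 mul1mx.
clearbody R.
have U1 : (1%:M + R) \in unitmx.
  rewrite unitmxE det_trig; last first.
    apply/is_trig_mxP => i j lij; rewrite !mxE.
    have -> : (i == j) = false by apply/eqP => e; move: lij; rewrite e ltnn.
    rewrite add0r.
    apply/eqP; apply: contraTT lij => /Rlt hji; by rewrite -leqNgt ltnW.
  rewrite big1 ?unitr1 // => i _; rewrite !mxE eqxx.
  have -> : R i i = 0 by apply/eqP; apply: contraFT (ltnn i) => /Rlt.
  by rewrite addr0.
exists (W *m (1%:M + R) *m row_ebase Y); apply/andP; split.
  by rewrite !unitmx_mul col_ebase_unit unitmx_perm U1 row_ebase_unit.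
have -> : Y - W *m (1%:M + R) *m row_ebase Y = - (W *m row_ebase Y).
  by rewrite {1}eY mulmxDr mulmxDl mulmx1 opprD addrCA subrr addr0.
by rewrite -scaleN1r unitmxZ ?unitrN1 // !unitmx_mul col_ebase_unit unitmx_perm row_ebase_unit.
Qed.

Section Trunc.
Variable n : nat.
Variable f : 'I_n -> nat.

Definition upperf (X : 'M['F_2]_n) := forall r c, (f c < f r)%N -> X r c = 0.
Definition diagf (X : 'M['F_2]_n) := forall r c, f r != f c -> X r c = 0.
Definition truncf (X : 'M['F_2]_n) : 'M['F_2]_n :=
  \matrix_(r, c) if f r == f c then X r c else 0.

Lemma upperf1 : upperf 1%:M.
Proof. move=> r c h; rewrite mxE; case: eqP => // e; by move: h; rewrite e ltnn. Qed.

Lemma upperf_mul X Y : upperf X -> upperf Y -> upperf (X *m Y).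
Proof.
move=> hX hY r c h; rewrite mxE big1 // => m _.
case: (ltnP (f m) (f r)) => h1; first by rewrite hX ?mul0r.
by rewrite hY ?mulr0 //; apply: leq_trans h h1.
Qed.

Lemma diagf1 : diagf 1%:M.
Proof. move=> r c h; rewrite mxE; case: eqP => // e; by move: h; rewrite e eqxx. Qed.

Lemma diagf_mul X Y : diagf X -> diagf Y -> diagf (X *m Y).
Proof.
move=> hX hY r c h; rewrite mxE big1 // => m _.
case: (f r =P f m) => e; last by rewrite hX ?mul0r //; apply/eqP.
by rewrite hY ?mulr0 // -e.
Qed.

Lemma diagf_trunc X : diagf (truncf X).
Proof. by move=> r c /negbTE h; rewrite mxE h. Qed.

Lemma invmx_closed (P : 'M['F_2]_n -> Prop) X :
  P 1%:M -> (forall A B, P A -> P B -> P (A *m B)) -> X \in unitmx -> P X -> P (invmx X).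
Proof.
move=> P1 PM uX PX.
pose g := fun M : 'M['F_2]_n => X *m M.
have ginj : injective g.
  by move=> A B /(congr1 (mulmx (invmx X))); rewrite /g !mulmxA mulVmx // !mul1mx.
have Pi i : P (iter i g 1%:M) by elim: i => //= i IH; apply: PM.
have := iter_order ginj 1%:M; rewrite -orderSpred /= => e.
suff -> : invmx X = iter (fingraph.order g 1%:M).-1 g 1%:M by apply: Pi.
have e' : X *m iter (fingraph.order g 1%:M).-1 g 1%:M = 1%:M := e.
by rewrite -[invmx X]mulmx1 -{1}e' mulmxA mulVmx // mul1mx.
Qed.

Lemma trunc_mul X Y : upperf X -> upperf Y -> truncf (X *m Y) = truncf X *m truncf Y.
Proof.
move=> hX hY; apply/matrixP => r c; rewrite !mxE.
case: (f r =P f c) => e.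
  apply: eq_bigr => m _; rewrite !mxE.
  case: (f r =P f m) => e1; first by rewrite -e1 e eqxx.
  case: (ltnP (f m) (f r)) => h1; first by rewrite hX ?mul0r.
  rewrite hY ?mulr0 ?mul0r //; rewrite -e ltn_neqAle h1 andbT; by apply/eqP.
rewrite big1 // => m _; rewrite !mxE.
case: (f r =P f m) => e1; last by rewrite mul0r.
by case: (f m =P f c) => e2 //; [case: e; rewrite e1 e2 | rewrite mulr0].
Qed.

Lemma trunc1 : truncf 1%:M = 1%:M.
Proof.
apply/matrixP => r c; rewrite !mxE; case: eqP => // e.
by case: eqP => // erc; case: e; rewrite erc.
Qed.

Lemma upperf_inv X : X \in unitmx -> upperf X -> upperf (invmx X).
Proof. move=> uX hX; apply: (@invmx_closed upperf X) => //; [exact: upperf1 | exact: upperf_mul]. Qed.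

Lemma diagf_inv X : X \in unitmx -> diagf X -> diagf (invmx X).
Proof. move=> uX hX; apply: (@invmx_closed diagf X) => //; [exact: diagf1 | exact: diagf_mul]. Qed.

Lemma trunc_unit X : X \in unitmx -> upperf X -> truncf X \in unitmx.
Proof.
move=> uX hX.
have : truncf X *m truncf (invmx X) = 1%:M.
  by rewrite -trunc_mul ?mulmxV ?trunc1 //; apply: upperf_inv.
by case/mulmx1_unit.
Qed.
End Trunc.


Lemma mxprod_sum n (T : Type) (ts : seq T) (KK : T -> 'M['F_2]_n) :
  (forall t t', KK t *m KK t' = 0) ->
  mxprod (map (fun t => 1%:M + KK t) ts) = 1%:M + \sum_(t <- ts) KK t.
Proof.
move=> H; elim: ts => [|t ts IH] /=; first by rewrite big_nil addr0.
rewrite IH big_cons mulmxDl !mulmxDr !mul1mx mulmx1.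
have -> : KK t *m \sum_(t0 <- ts) KK t0 = 0 by rewrite mulmx_sumr big1.
by rewrite addr0 [RHS]addrA addrAC.
Qed.

Section Level.
Variables N k h : nat.
Hypothesis hh : (0 < h)%N.

Definition supp (p : 'I_N * 'I_N) : bool :=
  ~~ odd (p.1 %/ h) && (p.2 %/ h == (p.1 %/ h).+1)%N.
Definition ptag (p : 'I_N * 'I_N) : nat := ((p.2 %% h + h - p.1 %% h) %% h)%N.

Lemma ptag_lt (p : 'I_N * 'I_N) : (ptag p < h)%N.
Proof. by rewrite ltn_pmod. Qed.

Lemma ptagP (p : 'I_N * 'I_N) : ((p.1 %% h + ptag p) %% h = p.2 %% h)%N.
Proof.
rewrite /ptag modnDmr.
have hx := ltn_pmod p.1 hh.
have -> : (p.1 %% h + (p.2 %% h + h - p.1 %% h) = p.2 %% h + h)%N by lia.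
by rewrite modnDr modn_mod.
Qed.

Lemma ptag_inj (p q : 'I_N * 'I_N) : supp p -> supp q -> ptag p = ptag q ->
  (p.1 == q.1) || (p.2 == q.2) -> p = q.
Proof.
case: p q => [p1 p2] [q1 q2] /andP[_ /eqP /= sp] /andP[_ /eqP /= sq] et.
have tp := ptagP (p1, p2); have tq := ptagP (q1, q2); rewrite /= et in tp tq.
move: (ptag (q1, q2)) tp tq => t tp tq /=.
case/orP => /eqP e.
  have e' : (p1 : nat) = q1 by rewrite e.
  have m2 : (p2 %% h = q2 %% h)%N by rewrite -tp -tq e'.
  have d2 : (p2 %/ h = q2 %/ h)%N by rewrite sp sq e'.
  have -> : p2 = q2 by apply: val_inj; rewrite /= (divn_eq p2 h) (divn_eq q2 h) m2 d2.
  by rewrite e.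
have : (p1 %% h + t == q1 %% h + t %[mod h])%N by rewrite tp tq e.
rewrite eqn_modDr !modn_mod => /eqP m1.
have d1 : (p1 %/ h = q1 %/ h)%N by apply: succn_inj; rewrite -sp -sq e.
have -> : p1 = q1 by apply: val_inj; rewrite /= (divn_eq p1 h) (divn_eq q1 h) m1 d1.
by rewrite e.
Qed.

Lemma supp_neq (p q : 'I_N * 'I_N) : supp p -> supp q -> p.1 != q.2.
Proof.
case/andP => op _ /andP[oq /eqP eq]; apply/eqP => e.
by move: op; rewrite e eq /= oq.
Qed.

Definition SM (M : 'M['F_2]_(N * k)) := forall u v, unB M u v != 0 -> supp (u, v).

Lemma SM_mul0 M M' : SM M -> SM M' -> M *m M' = 0.
Proof.
move=> hM hM'; rewrite -(bmK M) -(bmK M') bm_mul -bm0; apply: bm_ext => u w.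
rewrite big1 // => v _.
case: (unB M u v =P 0) => [->|/eqP h1]; first by rewrite mul0mx.
case: (unB M' v w =P 0) => [->|/eqP h2]; first by rewrite mulmx0.
case/andP: (hM _ _ h1) => /= o1 /eqP e1; case/andP: (hM' _ _ h2) => /= o2 _.
by move: o2; rewrite e1 /= o1.
Qed.

Lemma SM_bm F : (forall u v, F u v != 0 -> supp (u, v)) -> SM (bm F).
Proof. by move=> H u v; rewrite unBK; apply: H. Qed.

Lemma SM_add M M' : SM M -> SM M' -> SM (M + M').
Proof.
move=> hM hM' u v; rewrite -(bmK M) -(bmK M') -bmD unBK.
case: (unB M u v =P 0) => [->|/eqP h1]; last by move=> _; apply: hM.
by rewrite add0r; apply: hM'.
Qed.

Lemma level_circ (K : 'M['F_2]_(N * k)) : SM K ->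
  @circuit_with_layers N k (2 * h) (1%:M + K).
Proof.
move=> hK.
pose A u v := xchoose (split2 (unB K u v)).
have AP u v := xchooseP (split2 (unB K u v)).
pose B u v := unB K u v - A u v.
pose QA (t : 'I_h) (p : 'I_N * 'I_N) := [&& supp p, ptag p == t & A p.1 p.2 != 0].
pose QB (t : 'I_h) (p : 'I_N * 'I_N) := [&& supp p, ptag p == t & B p.1 p.2 != 0].
pose KA t := bm (fun u v => if QA t (u, v) then A u v else 0).
pose KB t := bm (fun u v => if QB t (u, v) then B u v else 0).
have SMA t : SM (KA t) by apply: SM_bm => u v; case/boolP: (QA t (u, v)) => [/and3P[] //|]; rewrite eqxx.
have SMB t : SM (KB t) by apply: SM_bm => u v; case/boolP: (QB t (u, v)) => [/and3P[] //|]; rewrite eqxx.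
have Q1 t (Q : 'I_h -> pred ('I_N * 'I_N)) :
    (forall p, Q t p -> supp p && (ptag p == t)) ->
    forall p q, Q t p -> Q t q -> (p.1 == q.1) || (p.2 == q.2) -> p = q.
  move=> HQ p q /HQ /andP[sp /eqP tp] /HQ /andP[sq /eqP tq]; apply: ptag_inj => //.
  by rewrite tp tq.
have -> : 1%:M + K = mxprod (map (fun t => (1%:M + KA t) *m (1%:M + KB t)) (enum 'I_h)).
  have -> : map (fun t => (1%:M + KA t) *m (1%:M + KB t)) (enum 'I_h) =
            map (fun t => 1%:M + (KA t + KB t)) (enum 'I_h).
    apply: eq_map => t; rewrite mulmxDl !mulmxDr !mulmx1 (SM_mul0 (SMA t) (SMB t)).
    by rewrite !mul1mx addr0 -addrA (addrC (KB t)).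
  rewrite mxprod_sum; last first.
    by move=> t t'; apply: SM_mul0; apply: SM_add.
  congr (_ + _); rewrite big_split /= /KA /KB -!bm_sum -bmD -{1}(bmK K).
  apply: bm_ext => u v; rewrite -big_split /=.
  case: (boolP (supp (u, v))) => su; last first.
    rewrite big1 => [|t _]; last by rewrite /QA /QB (negbTE su) addr0.
    by apply/eqP; apply: contraR su; apply: hK.
  rewrite big_enum /= (bigD1 (Ordinal (ptag_lt (u, v)))) //= big1 ?addr0 => [|t ne].
    rewrite /QA /QB su eqxx /=.
    have gen (x y : 'M['F_2]_k) :
        (if x != 0 then x else 0) + (if y != 0 then y else 0) = x + y.
      by case: (x =P 0) => [->|_]; case: (y =P 0) => [->|_].
    by rewrite gen /B addrC subrK.
  rewrite /QA /QB /=.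
  have -> : (ptag (u, v) == t) = false.
    by apply/negP => /eqP e; move: ne; rewrite -(inj_eq val_inj) /= e eqxx.
  by rewrite !andbF addr0.
apply: (@circ_weak _ _ ((1 + 1) * size (enum 'I_h))%N); first by rewrite size_enum_ord.
apply: circ_mxprod => t.
apply: circ_mul; [apply: (layer_circ (Q := QA t) (Yf := fun p => A p.1 p.2)) | apply: (layer_circ (Q := QB t) (Yf := fun p => B p.1 p.2))].
- by apply: (Q1 t QA) => p /and3P[-> ->].
- by move=> p q /and3P[sp _ _] /and3P[sq _ _]; apply: supp_neq.
- move=> p /and3P[_ _ nz]; move: (AP p.1 p.2) nz; rewrite /= /A.
  by case/andP => /orP[-> //|/eqP ->]; rewrite eqxx.
- by apply: (Q1 t QB) => p /and3P[-> ->].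
- by move=> p q /and3P[sp _ _] /and3P[sq _ _]; apply: supp_neq.
- move=> p /and3P[_ _ nz]; move: (AP p.1 p.2) nz; rewrite /= /B /A.
  by case/andP => _ /orP[-> //|/eqP ->]; rewrite eqxx.
Qed.
End Level.


Section Upper.
Variables a k : nat.
Local Notation N := (2 ^ a)%N.
Variable X : 'M['F_2]_(N * k).
Hypothesis uX : X \in unitmx.
Hypothesis bX : block_upper X.

Definition fm (m : nat) (r : 'I_(N * k)) : nat := (blk r %/ 2 ^ m)%N.
Definition Tm m := truncf (fm m) X.

Lemma upX m : upperf (fm m) X.
Proof.
move=> r c h; rewrite -(qidxK r) -(qidxK c); apply: bX.
by move: h; rewrite /fm ltnNge; apply: contraNT; rewrite -leqNgt => /leq_div2r ->.
Qed.

Lemma fmS m r : fm m.+1 r = (fm m r %/ 2)%N.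
Proof. by rewrite /fm expnSr divnMA. Qed.

Lemma T_unit m : Tm m \in unitmx.
Proof. rewrite /Tm; apply: trunc_unit; [exact: uX | exact: upX]. Qed.

Lemma T0_inblock : in_block (Tm 0).
Proof.
have e : Tm 0 = bm (fun u v => if u == v then unB X u u else 0).
  apply/matrixP => r c; rewrite !mxE /fm expn0 !divn1.
  case: (blk r =P blk c) => [e|ne].
    by rewrite e eqxx mxE -{1}e !qidxK.
  have /negbTE -> : (blk r : nat) != blk c by apply/eqP => /val_inj.
  first [ by rewrite [RHS]mxE | by apply/esym; apply: (mxE _ _) | by rewrite /= !mxE | by [] | by apply/esym; rewrite -[RHS](@mxE _ k k (fun _ _ => 0))].
rewrite e; apply: inblock_diag => u.
set W := invmx (Tm 0).
have dW : diagf (fm 0) W by apply: diagf_inv; [exact: T_unit | exact: diagf_trunc].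
have : Tm 0 *m W = 1%:M by rewrite mulmxV // T_unit.
rewrite e -(bmK W) (_ : bm (unB W) = bm (fun u v => if u == v then unB W u u else 0)).
  rewrite bm_diagl -bm1 => /(congr1 (fun M => unB M u u)); rewrite !unBK eqxx.
  by case/mulmx1_unit.
apply: bm_ext => u' v; case: eqP => [->//|ne].
apply/matrixP => j j'; rewrite !mxE dW //.
by rewrite /fm expn0 !divn1 !blk_qidx; apply/eqP => /val_inj.
Qed.

Lemma T_step m : exists K, SM (2 ^ m) K /\ Tm m.+1 = Tm m *m (1%:M + K).
Proof.
set Ti := invmx (Tm m).
set L := Tm m.+1 - Tm m.
exists (Ti *m L); split; last first.
  by rewrite mulmxDr mulmxA mulmxV ?T_unit // mulmx1 mul1mx /L addrC subrK.
move=> u v /unB_neq0 [j [j' nz]].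
move: nz; set r := qidx u j; set c := qidx v j'.
rewrite mxE => nz.
have [x hx] : exists x, Ti r x * L x c != 0.
  apply/existsP; move: nz; apply: contraR; rewrite negb_exists => /forallP H.
  by apply/eqP; apply: big1 => x _; apply/eqP; move: (H x); rewrite negbK.
have dTi : diagf (fm m) Ti by apply: diagf_inv; [exact: T_unit | exact: diagf_trunc].
have e1 : fm m r = fm m x.
  apply/eqP; apply: contraR hx => /dTi ->; by rewrite mul0r.
have hL : L x c != 0 by apply: contraNneq hx => ->; rewrite mulr0.
move: hL; rewrite /L !mxE.
case: (fm m x =P fm m c) => e2.
  have e3 : fm m.+1 x = fm m.+1 c by rewrite !fmS e2.
  by rewrite e3 !eqxx subrr eqxx.
case: (fm m.+1 x =P fm m.+1 c) => e3; last by rewrite subrr eqxx.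
rewrite subr0 => nX.
have e4 : (fm m x < fm m c)%N.
  rewrite ltn_neqAle; apply/andP; split; first by apply/eqP.
  rewrite leqNgt; apply: contra nX => h; by rewrite (@upX m x c h) eqxx.
rewrite !fmS in e3.
have bu : blk r = u by rewrite blk_qidx.
have bv : blk c = v by rewrite blk_qidx.
move: e1 e3 e4; rewrite /fm bu bv /supp.
move: (u %/ 2 ^ m)%N (v %/ 2 ^ m)%N (blk x %/ 2 ^ m)%N => p q y -> e3 e4 /=.
rewrite -[odd y]/(odd y : bool); have := modn2 y; lia.
Qed.

Lemma T_circ m : @circuit_with_layers N k (2 * (2 ^ m - 1)) (Tm m).
Proof.
elim: m => [|m IH]; first by rewrite expn0 subnn muln0; apply: circ_inblock; exact: T0_inblock.
have [K [hK ->]] := T_step m.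
have := circ_mul IH (level_circ (expn_gt0 2 m) hK).
apply: circ_weak; rewrite expnS; have := expn_gt0 2 m; lia.
Qed.

Lemma Ta : Tm a = X.
Proof.
apply/matrixP => r c; rewrite mxE /fm !divn_small ?eqxx //; exact: ltn_ord.
Qed.

Lemma upper_circ : @circuit_with_layers N k (2 * (N - 1)) X.
Proof. by rewrite -Ta; exact: T_circ. Qed.
End Upper.


Section Tr.
Variables N k : nat.

Lemma inblock_tr (M : 'M['F_2]_(N * k)) : in_block M -> in_block M^T.
Proof.
case=> C [hC e]; exists (fun i => (C i)^T); split => [i|i i' j j']; first by rewrite unitmx_tr.
rewrite mxE e eq_sym; case: eqP => [->|_]; by rewrite ?mxE.
Qed.

Lemma perm_pairs (T : eqType) (s : seq (T * T)) :
  perm_eq (flatten [seq [:: q.1; q.2] | q <- map (fun p => (p.2, p.1)) s])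
          (flatten [seq [:: p.1; p.2] | p <- s]).
Proof.
elim: s => //= p s IH.
change (perm_eq ([:: p.2; p.1] ++ flatten [seq [:: q.1; q.2] | q <- map (fun p => (p.2, p.1)) s]) ([:: p.1; p.2] ++ flatten [seq [:: p.1; p.2] | p <- s])).
have sw : perm_eq [:: p.2; p.1] [:: p.1; p.2] by rewrite (perm_catC [:: p.2] [:: p.1]) perm_refl.
exact: perm_cat sw IH.
Qed.

Lemma layer_tr (M : 'M['F_2]_(N * k)) : transversal_layer M -> transversal_layer M^T.
Proof.
case=> s [us e]; exists (map (fun p => (p.2, p.1)) s); split.
  by rewrite (perm_uniq (perm_pairs s)).
move=> i i' j j'; rewrite mxE e big_map; congr (_ + _).
  by rewrite !mxE eq_sym.
apply: eq_bigr => p _; rewrite /kron_entry !mxE /= andbC.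
by rewrite [j' == j]eq_sym.
Qed.

Lemma circ_tr L (M : 'M['F_2]_(N * k)) :
  circuit_with_layers L M -> circuit_with_layers L M^T.
Proof.
case=> l [hl [cl ->]]; apply: (circ_weak cl); clear cl.
elim: l hl => [|t l IH] hl /=; first by rewrite trmx1; exact: circ_one.
rewrite trmx_mul addnC; apply: circ_mul.
  by apply: IH => t' ht'; apply: hl; rewrite inE ht' orbT.
have := hl t (mem_head _ _); case: (t.1) => h.
  by apply: circ_layer; apply: layer_tr.
by apply: circ_inblock; apply: inblock_tr.
Qed.

Lemma qidx_lt (i i' : 'I_N) (j j' : 'I_k) : (i < i')%N -> (qidx i j < qidx i' j')%N.
Proof.
move=> h /=; have hj := ltn_ord j.
apply: (@leq_trans (i.+1 * k)%N); first by rewrite mulSn addnC ltn_add2r.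
by apply: leq_trans (leq_addr _ _); rewrite leq_mul2r h orbT.
Qed.
End Tr.

Lemma lup n (A : 'M['F_2]_n) : (0 < n)%N -> exists s (L U : 'M['F_2]_n),
  (A = perm_mx s *m (L *m U)) /\ (forall i j : 'I_n, (i < j)%N -> L i j = 0) /\
  (forall i j : 'I_n, (j < i)%N -> U i j = 0).
Proof.
case: n A => [//|n] A _.
move: (cormen_lup_correct A) (cormen_lup_perm A) (cormen_lup_lower A) (cormen_lup_upper A).
case: (cormen_lup A) => [[P L] U] /= hc /is_perm_mxP [s eP] hl hu.
exists (s^-1)%g, L, U; split.
  have hc' : perm_mx s *m A = L *m U by rewrite -eP; exact: hc.
  by rewrite -hc' mulmxA -perm_mxM mulVg perm_mx1 mul1mx.
split; last exact: hu.
move=> i j lij; rewrite hl; last exact: ltnW.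
have -> : (i == j) = false by apply/eqP => e; move: lij; rewrite e ltnn.
exact: mulr0n.
Qed.


Unset Implicit Arguments.

Theorem theorem1 (k a : nat) (hk : (1 <= k)%N) (ha : (1 <= a)%N) :
  let N := (2 ^ a)%N in
  (forall X : 'M['F_2]_(N * k), X \in unitmx ->
     exists (s : 'S_(N * k)) (M : 'M['F_2]_(N * k)),
       @circuit_with_layers N k (4 * (N - 1)) M /\ X = perm_mx s *m M) /\
  (forall X : 'M['F_2]_(N * k), X \in unitmx ->
     block_upper X \/ block_lower X ->
     @circuit_with_layers N k (2 * (N - 1)) X).
Proof.
move=> N.
have ii : forall X : 'M['F_2]_(N * k), X \in unitmx ->
    block_upper X \/ block_lower X -> @circuit_with_layers N k (2 * (N - 1)) X.
  move=> X uX [bu|bl]; first exact: upper_circ.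
  rewrite -[X]trmxK; apply: circ_tr; apply: upper_circ; first by rewrite unitmx_tr.
  by move=> i i' j j' h; rewrite mxE; apply: bl.
split => // X uX.
have npos : (0 < N * k)%N by rewrite muln_gt0 expn_gt0 hk.
have [s [L [U [eX [hL hU]]]]] := lup X npos.
have uLU : L *m U \in unitmx by move: uX; rewrite eX unitmx_mul unitmx_perm.
move: (uLU); rewrite unitmx_mul => /andP[uL uU].
exists s, (L *m U); split => //.
have -> : (4 * (N - 1) = 2 * (N - 1) + 2 * (N - 1))%N by rewrite -mulnDl.
apply: circ_mul; apply: ii => //; [right|left] => i i' j j' h.
- by apply: hL; apply: qidx_lt.
- by apply: hU; apply: qidx_lt.
Qed.
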